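(* Let $a\in\mathbb R$, $b\in[a,\infty)$, $u\in[-\infty,\infty)$, $v\in(u,\infty]$, $d,L\in\mathbb N$, $l=(l_0,l_1,\dots,l_L)\in\mathbb N^{L+1}$ satisfy $d\ge\sum_{k=1}^Ll_k(l_{k-1}+1)$. Then for all $\theta,\vartheta\in\mathbb R^d$, $$\sup_{x\in[a,b]^{l_0}}\|\mathscr N^{\theta,l}_{u,v}(x)-\mathscr N^{\vartheta,l}_{u,v}(x)\|_\infty\le L\max\{1,|a|,|b|\}(\|l\|_\infty+1)^L\bigl(\max\{1,\|\theta\|_\infty,\|\vartheta\|_\infty\}\bigr)^{L-1}\|\theta-\vartheta\|_\infty.$$
   Context: $\|\cdot\|_\infty$ is the maximum norm on any $\mathbb R^n$ (also applied to $l$). For $r,s\in\mathbb N$, $k\in\mathbb N_0$, $\theta\in\mathbb R^d$ with $d\ge k+rs+r$, $\mathcal A^{\theta,k}_{r,s}\colon\mathbb R^s\to\mathbb R^r$ has $i$-th component $x\mapsto\sum_{j=1}^s\theta_{k+(i-1)s+j}x_j+\theta_{k+rs+i}$. $\mathfrak C_{u,v,n}$ applies $y\mapsto\max\{u,\min\{y,v\}\}$ componentwise on $\mathbb R^n$ (identity if $u=-\infty$, $v=\infty$) and $\mathfrak R_n$ applies $y\mapsto\max\{y,0\}$ componentwise. With $s_k=\sum_{j=1}^kl_j(l_{j-1}+1)$, $\mathscr N^{\theta,l}_{u,v}=\mathfrak C_{u,v,l_L}\circ\mathcal A^{\theta,s_{L-1}}_{l_L,l_{L-1}}\circ\mathfrak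 R_{l_{L-1}}\circ\cdots\circ\mathfrak R_{l_1}\circ\mathcal A^{\theta,0}_{l_1,l_0}\colon\mathbb R^{l_0}\to\mathbb R^{l_L}$ (for $L=1$ just $\mathfrak C_{u,v,l_1}\circ\mathcal A^{\theta,0}_{l_1,l_0}$). *)

(* Defs.v *)
From HB Require Import structures.
From mathcomp Require Import all_boot all_order all_algebra.
From mathcomp Require Import reals constructive_ereal.
Set Implicit Arguments. Unset Strict Implicit. Unset Printing Implicit Defensive.
Import Order.TTheory GRing.Theory Num.Theory.
Local Open Scope ring_scope.

Section DNN.
Variable R : realType.

(* entries of a parameter vector theta in R^d, 0-indexed: theta_(m+1) = pget theta m *)
Definition pget (d : nat) (theta : 'rV[R]_d) (m : nat) : R :=
  match insub m with Some i => theta ord0 i | None => 0 end.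

Definition maxnorm (n : nat) (x : 'rV[R]_n) : R :=
  \big[Num.max/0]_(i < n) `|x ord0 i|.

(* affine map A^{theta,k}_{r,s}; vectors are represented as nat -> R,
   components 0-indexed (component i here = component i+1 in the paper) *)
Definition affine (d : nat) (theta : 'rV[R]_d) (k r s : nat) (x : nat -> R)
  : nat -> R :=
  fun i => \sum_(j < s) pget theta (k + i * s + j) * x j
           + pget theta (k + r * s + i).

Definition relu (x : nat -> R) : nat -> R := fun i => Num.max (x i) 0.

Definition clip (u v : \bar R) (x : nat -> R) : nat -> R :=
  fun i => fine (Order.max u (Order.min (x i)%:E v)).

Definition sdim (l : seq nat) (k : nat) : nat :=
  \sum_(1 <= j < k.+1) nth 0 l j * (nth 0 l j.-1 + 1).

Fixpoint hidden (d : nat) (theta : 'rV[R]_d) (l : seq nat) (n : nat)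
  (x : nat -> R) : nat -> R :=
  match n with
  | 0 => x
  | n'.+1 => relu (affine theta (sdim l n') (nth 0 l n'.+1) (nth 0 l n')
                    (hidden theta l n' x))
  end.

Definition vec_of_row (n : nat) (x : 'rV[R]_n) : nat -> R := pget x.

Definition realization (d : nat) (theta : 'rV[R]_d) (l : seq nat)
  (u v : \bar R) (x : 'rV[R]_(nth 0 l 0)) : nat -> R :=
  let L := (size l).-1 in
  clip u v (affine theta (sdim l L.-1) (nth 0 l L) (nth 0 l L.-1)
             (hidden theta l L.-1 (vec_of_row x))).

End DNN.

Arguments realization {R d} theta l u v x _.
Arguments hidden {R d} theta l n x _.

(* Main.v *)
Require Import Defs.
From HB Require Import structures.
From mathcomp Require Import all_boot all_order all_algebra.
From mathcomp Require Import reals constructive_ereal ring lra.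
Import Order.TTheory GRing.Theory Num.Theory.
Local Open Scope ring_scope.

Set Implicit Arguments. Unset Strict Implicit.
Section Aux.
Variable R : realType.
Implicit Types (c : R).

Lemma lip_max c (y z : R) : `|Num.max c y - Num.max c z| <= `|y - z|.
Proof.
case: (leP c y) => h1; case: (leP c z) => h2;
rewrite ?ler_norml; apply/andP; split;
rewrite ?ler_norml; move: h1 h2;
case: (lerP 0 (y - z)) => h3 h1 h2;
rewrite ?(ger0_norm h3) ?(ltr0_norm h3); lra.
Qed.

Lemma lip_min c (y z : R) : `|Num.min y c - Num.min z c| <= `|y - z|.
Proof.
case: (leP y c) => h1; case: (leP z c) => h2;
rewrite ?ler_norml; apply/andP; split;
move: h1 h2;
case: (lerP 0 (y - z)) => h3 h1 h2;
rewrite ?(ger0_norm h3) ?(ltr0_norm h3); lra.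
Qed.

Lemma lip_clip (u v : \bar R) (F G : nat -> R) i : u != +oo%E -> (u < v)%E ->
  `|clip u v F i - clip u v G i| <= `|F i - G i|.
Proof.
rewrite /clip => hu huv; move: (F i) (G i) => y z.
case: u hu huv => [u'| |] // _; case: v => [v'| |] //= _.
- rewrite -!EFin_min -!EFin_max /=.
  apply: le_trans (lip_max _ _ _) _; exact: lip_min.
- rewrite !miney -!EFin_max /=; exact: lip_max.
- rewrite -!EFin_min !maxNye /=; exact: lip_min.
- by rewrite !miney !maxNye /=.
Qed.

Lemma lip_relu (y z : R) : `|Num.max y 0 - Num.max z 0| <= `|y - z|.
Proof. by rewrite ![Num.max _ 0]maxC lip_max. Qed.

Lemma relu_le (y : R) : `|Num.max y 0| <= `|y|.
Proof.
case: (leP 0 y) => h; first by rewrite (ger0_norm h).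
by rewrite normr0.
Qed.

Lemma maxnorm_ge0 n (x : 'rV[R]_n) : 0 <= maxnorm x.
Proof. by rewrite /maxnorm; elim/big_ind: _ => // p q hp hq; rewrite le_max hp. Qed.

Lemma maxnorm_ge n (x : 'rV[R]_n) i : `|x ord0 i| <= maxnorm x.
Proof. by rewrite /maxnorm (bigD1 i) //= le_max lexx. Qed.

Lemma pget_le n (x : 'rV[R]_n) m : `|pget x m| <= maxnorm x.
Proof.
rewrite /pget; case: insubP => [i _ _|_]; first exact: maxnorm_ge.
by rewrite normr0 maxnorm_ge0.
Qed.

Lemma pgetB n (x y : 'rV[R]_n) m : pget (x - y) m = pget x m - pget y m.
Proof.
rewrite /pget; case: insubP => [i _ _|_]; first by rewrite !mxE.
by rewrite subr0.
Qed.

Lemma bigmax_le n (f : 'I_n -> R) B : 0 <= B -> (forall i, f i <= B) ->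
  \big[Num.max/0]_(i < n) f i <= B.
Proof. by move=> h0 hf; elim/big_ind: _ => // p q hp hq; rewrite ge_max hp. Qed.

Variables (W M D : R).
Hypotheses (W0 : 0 <= W) (M0 : 0 <= M) (D0 : 0 <= D).

Lemma sum_bound s (F : 'I_s -> R) C : (s%:R <= W) -> 0 <= C ->
  (forall j, `|F j| <= C) -> `|\sum_(j < s) F j| <= W * C.
Proof.
move=> hs hC hF; apply: le_trans (ler_norm_sum _ _ _) _.
apply: le_trans (_ : \sum_(j < s) C <= _).
  by apply: ler_sum => j _; apply: hF.
rewrite sumr_const card_ord -mulr_natl; exact: ler_wpM2r.
Qed.

Lemma affine_bound d (th : 'rV[R]_d) k r s x B i :
  s%:R <= W -> 0 <= B -> (forall m, `|pget th m| <= M) ->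
  (forall j, `|x j| <= B) -> `|affine th k r s x i| <= M * (W * B + 1).
Proof.
move=> hs hB hth hx; rewrite /affine.
apply: le_trans (ler_normD _ _) _.
rewrite mulrDr mulr1 lerD //.
rewrite mulrCA; apply: sum_bound => //; first exact: mulr_ge0.
move=> j; rewrite normrM; apply: ler_pM => //.
Qed.

Lemma affine_diff d (th vt : 'rV[R]_d) k r s x y B E i :
  s%:R <= W -> 0 <= B -> 0 <= E ->
  (forall m, `|pget vt m| <= M) ->
  (forall m, `|pget th m - pget vt m| <= D) ->
  (forall j, `|x j| <= B) -> (forall j, `|x j - y j| <= E) ->
  `|affine th k r s x i - affine vt k r s y i| <= D * (W * B + 1) + M * W * E.
Proof.
move=> hs hB hE hvt hD hx hxy; rewrite /affine.
have -> : \sum_(j < s) pget th (k + i * s + j) * x j + pget th (k + r * s + i) -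
    (\sum_(j < s) pget vt (k + i * s + j) * y j + pget vt (k + r * s + i)) =
  \sum_(j < s) ((pget th (k + i * s + j) - pget vt (k + i * s + j)) * x j
                + pget vt (k + i * s + j) * (x j - y j))
  + (pget th (k + r * s + i) - pget vt (k + r * s + i)).
  rewrite opprD addrACA -sumrN -big_split /=; congr (_ + _).
  by apply: eq_bigr => j _; rewrite mulrBl mulrBr addrA subrK.
apply: le_trans (ler_normD _ _) _.
have -> : D * (W * B + 1) + M * W * E = W * (D * B + M * E) + D by ring.
apply: lerD => //; apply: sum_bound => //.
  by apply: addr_ge0; apply: mulr_ge0.
move=> j; apply: le_trans (ler_normD _ _) _; rewrite !normrM.
by apply: lerD; apply: ler_pM.
Qed.

End Aux.
Unset Implicit Arguments. Set Strict Implicit.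

Theorem corollary2p37 (R : realType) (a b : R) (u v : \bar R) (d L : nat)
  (l : seq nat)
  (hab : a <= b) (hu : u != +oo%E) (huv : (u < v)%E)
  (hd : (0 < d)%N) (hL : (0 < L)%N)
  (hsize : size l = L.+1) (hl : all (fun k => 0 < k)%N l)
  (hdim : (sdim l L <= d)%N)
  (theta vartheta : 'rV[R]_d) :
  forall x : 'rV[R]_(nth 0%N l 0),
    (forall i, a <= x ord0 i <= b) ->
    \big[Num.max/0]_(i < nth 0%N l L)
       `|realization theta l u v x i - realization vartheta l u v x i|
    <= L%:R * Num.max 1 (Num.max `|a| `|b|)
       * ((\max_(k <- l) k)%N%:R + 1) ^+ L
       * (Num.max 1 (Num.max (maxnorm theta) (maxnorm vartheta))) ^+ L.-1
       * maxnorm (theta - vartheta).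
Proof.
move=> x hx.
set c := Num.max 1 (Num.max `|a| `|b|).
set W := (\max_(k <- l) k)%N%:R.
set M := Num.max 1 (Num.max (maxnorm theta) (maxnorm vartheta)).
set D := maxnorm (theta - vartheta).
have c1 : 1 <= c by rewrite le_max lexx.
have M1 : 1 <= M by rewrite le_max lexx.
have M0 : 0 <= M by apply: le_trans M1.
have W0 : 0 <= W by [].
have D0 : 0 <= D by apply: maxnorm_ge0.
have hW : forall n, (nth 0%N l n)%:R <= W.
  move=> n; rewrite ler_nat; case: (ltnP n (size l)) => hn.
    by apply: leq_bigmax_seq => //; apply: mem_nth.
  by rewrite nth_default.
have hth : forall m, `|pget theta m| <= M.
  move=> m; apply: le_trans (pget_le theta m) _; by rewrite le_max le_max lexx orbT.
have hvt : forall m, `|pget vartheta m| <= M.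
  move=> m; apply: le_trans (pget_le vartheta m) _; by rewrite le_max le_max lexx !orbT.
have hD : forall m, `|pget theta m - pget vartheta m| <= D.
  by move=> m; rewrite -pgetB; apply: pget_le.
set x0 := vec_of_row x.
have hx0 : forall j, `|x0 j| <= c.
  move=> j; rewrite /x0 /vec_of_row /pget; case: insubP => [i _ _|_].
    have /andP[h1 h2] := hx i.
    rewrite le_max; apply/orP; right; rewrite le_max.
    case: (lerP 0 (x ord0 i)) => h.
      by rewrite (ger0_norm h); apply/orP; right; apply: le_trans h2 (ler_norm _).
    rewrite (ltr0_norm h); apply/orP; left.
    by apply: le_trans (_ : - a <= _); [rewrite lerN2 | rewrite -normrN ler_norm].
  by rewrite normr0; apply: le_trans c1.
pose B n := c * (W + 1) ^+ n * M ^+ n.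
have B1 : forall n, 1 <= B n.
  move=> n; rewrite /B; apply: mulr_ege1; last exact: exprn_ege1.
  by apply: mulr_ege1 => //; apply: exprn_ege1; rewrite lerDr.
have hB : forall n j, `|hidden theta l n x0 j| <= B n.
  elim=> [|n IH] j /=; first by rewrite /B !expr0 !mulr1.
  rewrite /relu; apply: le_trans (relu_le _) _.
  apply: le_trans (affine_bound M0 _ _ _ (hW n) (le_trans ler01 (B1 n)) hth IH) _.
  rewrite /B !exprS.
  have -> : c * ((W + 1) * (W + 1) ^+ n) * (M * M ^+ n) = M * ((W + 1) * B n)
    by rewrite /B; ring.
  apply: ler_wpM2l => //; rewrite mulrDl mul1r lerD2l; exact: B1.
have step : forall n k r i,
  (forall j, `|hidden theta l n x0 j - hidden vartheta l n x0 j|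
      <= n%:R * c * (W + 1) ^+ n * M ^+ n.-1 * D) ->
  `|affine theta k r (nth 0%N l n) (hidden theta l n x0) i
    - affine vartheta k r (nth 0%N l n) (hidden vartheta l n x0) i|
  <= n.+1%:R * c * (W + 1) ^+ n.+1 * M ^+ n * D.
  move=> n k r i IH.
  have Ep : 0 <= n%:R * c * (W + 1) ^+ n * M ^+ n.-1 * D.
    apply: mulr_ge0 => //; apply: mulr_ge0; last by apply: exprn_ge0.
    apply: mulr_ge0; last by apply: exprn_ge0; apply: addr_ge0.
    by apply: mulr_ge0 => //; apply: le_trans c1.
  apply: le_trans (affine_diff M0 D0 _ _ _ (hW n) (le_trans ler01 (B1 n)) Ep hvt hD (hB n) IH) _.
  have e1 : M * (n%:R * c * (W + 1) ^+ n * M ^+ n.-1 * D)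
            = n%:R * c * (W + 1) ^+ n * M ^+ n * D.
    case: n {IH Ep} => [|n]; first by rewrite !mul0r mulr0.
    by rewrite /= [M ^+ n.+1]exprS; ring.
  have -> : M * W * (n%:R * c * (W + 1) ^+ n * M ^+ n.-1 * D)
      = W * (n%:R * c * (W + 1) ^+ n * M ^+ n * D) by rewrite -e1; ring.
  have h1 : D * (W * B n + 1) <= D * ((W + 1) * B n).
    by apply: ler_wpM2l => //; rewrite mulrDl mul1r lerD2l; exact: B1.
  apply: le_trans (lerD h1 (lexx _)) _.
  have h2 : W * (n%:R * c * (W + 1) ^+ n * M ^+ n * D)
        <= (W + 1) * (n%:R * c * (W + 1) ^+ n * M ^+ n * D).
    apply: ler_wpM2r; last by rewrite lerDl.
    apply: mulr_ge0 => //; apply: mulr_ge0; last by apply: exprn_ge0.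
    apply: mulr_ge0; last by apply: exprn_ge0; apply: addr_ge0.
    by apply: mulr_ge0 => //; apply: le_trans c1.
  apply: le_trans (lerD (lexx _) h2) _.
  rewrite /B exprS -natr1 le_eqVlt; apply/orP; left; apply/eqP; ring.
have hdiff : forall n j, `|hidden theta l n x0 j - hidden vartheta l n x0 j|
      <= n%:R * c * (W + 1) ^+ n * M ^+ n.-1 * D.
  elim=> [|n IH] j /=; first by rewrite subrr normr0 !mul0r.
  rewrite /relu; apply: le_trans (lip_relu _ _) _; exact: step.
apply: bigmax_le.
  apply: mulr_ge0 => //; apply: mulr_ge0; last by apply: exprn_ge0.
  apply: mulr_ge0; last by apply: exprn_ge0; apply: addr_ge0.
  by apply: mulr_ge0 => //; apply: le_trans c1.
move=> i; rewrite /realization hsize /=.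
apply: le_trans (lip_clip _ _ i hu huv) _.
have := step L.-1 (sdim l L.-1) (nth 0%N l L) i (hdiff L.-1).
by rewrite prednK.
Qed.
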